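(* Let $d$ be odd and $s$ even with $s\mid d-1$. Let $G=\langle\tau\rangle\rtimes\langle\sigma\rangle$ with $\tau$ of order $d$, $\sigma$ of order $s$, conjugation by $\sigma$ an automorphism of $\langle\tau\rangle$ of order exactly $s$, and $\sigma^{s/2}\tau\sigma^{-s/2}=\tau^{-1}$. For $j\in\mathbb{Z}$ let $\theta_j\in\{1,\dots,d-1\}$ be defined by $\sigma^j\tau\sigma^{-j}=\tau^{\theta_j}$. In $\mathbb{Z}[G]$ put $T_\sigma=\sum_{j=0}^{s-1}\sigma^j$ and \[\mathcal{B}=(1-\sigma^{s/2})\tau^{\frac{d+1}{2}}\sum_{j=0}^{\frac{s}{2}-1}\Big(\sum_{i=0}^{\theta_j-1}\tau^i\Big)\sigma^j.\] Then (i) $\sigma^{s/2}\mathcal{B}=-\mathcal{B}$, and (ii) $(1-\tau)\mathcal{B}=\tau^{\frac{d+1}{2}}T_\sigma(1-\tau)$. *)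

(* Defs.v *)
(* The integral group ring Z[gT] of a finite group gT,
   realised as integer-valued functions on gT with convolution product. *)
From HB Require Import structures.
From mathcomp Require Import all_boot all_order all_algebra all_fingroup all_solvable.
Set Implicit Arguments. Unset Strict Implicit. Unset Printing Implicit Defensive.
Import GRing.Theory.
Local Open Scope ring_scope.

Definition grring (gT : finGroupType) := {ffun gT -> int}.

Definition gr_of (gT : finGroupType) (g : gT) : {ffun gT -> int} :=
  [ffun x => (x == g)%:R].

Definition gr_mul (gT : finGroupType) (a b : {ffun gT -> int}) : {ffun gT -> int} :=
  [ffun g => \sum_(h : gT) a h * b (h^-1 * g)%g].

(* Main.v *)
Require Import Defs.
From HB Require Import structures.
From mathcomp Require Import all_boot all_order all_algebra all_fingroup all_solvable.
Set Implicit Arguments. Unset Strict Implicit. Unset Printing Implicit Defensive.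
Import GRing.Theory.
Local Open Scope ring_scope.

Section GR.
Variable gT : finGroupType.
Definition GR := grring gT.
HB.instance Definition _ := GRing.Zmodule.on GR.

Lemma gr_mulA : associative (@gr_mul gT : GR -> GR -> GR).
Proof.
move=> a b c; apply/ffunP=> g; apply/esym; rewrite ffunE.
rewrite (eq_bigr (fun h => \sum_(k : gT) a k * b (k^-1 * h)%g * c (h^-1 * g)%g)); last first.
  by move=> h _; rewrite ffunE big_distrl.
rewrite exchange_big ffunE /=; apply: eq_bigr => k _.
rewrite ffunE big_distrr /= (reindex_inj (mulgI k)) /=.
apply: eq_bigr => l _; rewrite mulrA invMg !mulgA mulVg mul1g; done.
Qed.

Lemma gr_mulr_of (a : GR) x : gr_mul a (gr_of x) = [ffun g => a (g * x^-1)%g].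
Proof.
apply/ffunP=> g; rewrite !ffunE (bigD1 (g * x^-1)%g) //= big1 ?addr0.
  by rewrite ffunE invMg invgK mulgKV eqxx mulr1.
move=> h /negPf hn; rewrite ffunE.
case: eqP => [e|]; last by rewrite mulr0.
by move: hn; rewrite -e invMg invgK mulKVg eqxx.
Qed.

Lemma gr_mull_of (a : GR) x : gr_mul (gr_of x) a = [ffun g => a (x^-1 * g)%g].
Proof.
apply/ffunP=> g; rewrite !ffunE (bigD1 x) //= big1 ?addr0.
  by rewrite ffunE eqxx mul1r.
by move=> h /negPf hn; rewrite ffunE hn mul0r.
Qed.

Lemma gr_mul1r : left_id (gr_of 1%g) (@gr_mul gT : GR -> GR -> GR).
Proof. by move=> a; rewrite gr_mull_of; apply/ffunP=> g; rewrite ffunE invg1 mul1g. Qed.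
Lemma gr_mulr1 : right_id (gr_of 1%g) (@gr_mul gT : GR -> GR -> GR).
Proof. by move=> a; rewrite gr_mulr_of; apply/ffunP=> g; rewrite ffunE invg1 mulg1. Qed.
Lemma gr_mulDl : left_distributive (@gr_mul gT : GR -> GR -> GR) +%R.
Proof.
move=> a b c; apply/ffunP=> g; rewrite !ffunE -big_split /=.
by apply: eq_bigr => h _; rewrite ffunE mulrDl.
Qed.
Lemma gr_mulDr : right_distributive (@gr_mul gT : GR -> GR -> GR) +%R.
Proof.
move=> a b c; apply/ffunP=> g; rewrite !ffunE -big_split /=.
by apply: eq_bigr => h _; rewrite ffunE mulrDr.
Qed.

HB.instance Definition _ := GRing.Zmodule_isPzRing.Build GR
  gr_mulA gr_mul1r gr_mulr1 gr_mulDl gr_mulDr.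

Lemma gr_of_mul x y : (gr_of x : GR) * gr_of y = gr_of (x * y)%g.
Proof.
rewrite [LHS]gr_mull_of; apply/ffunP=> g; rewrite !ffunE.
suff -> : ((x^-1 * g)%g == y) = (g == (x * y)%g) by []. by apply/eqP/eqP=> [<-|->]; rewrite ?mulKVg ?mulKg.
Qed.

Lemma gr_ofX x n : (gr_of (x ^+ n)%g : GR) = (gr_of x : GR) ^+ n.
Proof.
elim: n => [|n IH]; first by rewrite expg0 expr0.
by rewrite expgS exprS -IH gr_of_mul.
Qed.
End GR.

Lemma zmod_aux (V : zmodType) (a b c e : V) : a - b - (c - e) = a + e - (c + b).
Proof. by rewrite opprB opprD !addrA [RHS]addrAC (addrAC a e). Qed.

Unset Implicit Arguments.
Set Strict Implicit.
Theorem lemma6p2 (gT : finGroupType) (G : {group gT}) (tau sigma : gT)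
    (d s : nat) (theta : nat -> nat)
    (hd : odd d) (hs : ~~ odd s) (hsd : (s %| d.-1)%N)
    (htau : #[tau]%g = d) (hsig : #[sigma]%g = s)
    (hG : (<[tau]> ><| <[sigma]>)%g = G)
    (haut : forall k : nat, (0 < k < s)%N ->
        (sigma ^+ k * tau * (sigma ^+ k)^-1)%g != tau)
    (hinv : (sigma ^+ s./2 * tau * (sigma ^+ s./2)^-1)%g = (tau^-1)%g)
    (htheta : forall j : nat, (0 < theta j < d)%N /\
        (sigma ^+ j * tau * (sigma ^+ j)^-1)%g = (tau ^+ theta j)%g) :
  let one := gr_of (1%g : gT) in
  let Tsigma := \sum_(j < s) gr_of (sigma ^+ j)%g in
  let B := gr_mul (gr_mul (one - gr_of (sigma ^+ s./2)%g) (gr_of (tau ^+ d.+1./2)%g))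
             (\sum_(j < s./2)
                gr_mul (\sum_(i < theta j) gr_of (tau ^+ i)%g) (gr_of (sigma ^+ j)%g)) in
  gr_mul (gr_of (sigma ^+ s./2)%g) B = - B /\
  gr_mul (one - gr_of tau) B
    = gr_mul (gr_mul (gr_of (tau ^+ d.+1./2)%g) Tsigma) (one - gr_of tau).
Proof.
move=> one Tsigma B; rewrite /B /one /Tsigma.
have E (a b : grring gT) : gr_mul a b = (a : GR gT) * b by [].
have E1 : gr_of (1%g : gT) = (1 : GR gT) by [].
rewrite !E E1.
set h := s./2; set m := d.+1./2.
have hs2 : s = (h + h)%N.
  by rewrite addnn -[LHS]odd_double_half (negPf hs).
have hm2 : (m + m = d.+1)%N.
  by rewrite addnn -[RHS]odd_double_half /= hd.
set c := (sigma ^+ h)%g; set v := (tau ^+ m)%g.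
have conjE (x y z : gT) : (x * y * x^-1 = z)%g -> (x * y = z * x)%g.
  by move=> <-; rewrite mulgKV.
have Fs : (sigma ^+ s = 1)%g by rewrite -hsig expg_order.
have Fcc : (c * c = 1)%g by rewrite /c -expgD -hs2.
have Fvv : (v * v = tau)%g.
  by rewrite /v -expgD hm2 expgS -htau expg_order mulg1.
have Fvi : (v * tau^-1 = v^-1)%g by rewrite -Fvv invMg mulKVg.
have G1 : (c * tau = tau^-1 * c)%g by apply: conjE.
have Etv : (tau * v = v * tau)%g by rewrite /v -expgS expgSr.
have E2 : (c * v = v * c * tau)%g.
  have Gk k : (c * tau ^+ k = (tau ^+ k)^-1 * c)%g.
    elim: k => [|k IH]; first by rewrite expg0 invg1 mulg1 mul1g.
    by rewrite expgSr mulgA IH -mulgA G1 mulgA -invMg -expgS expgSr.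
  by rewrite Gk -mulgA G1 mulgA Fvi.
have E3 : (tau * c * v = v * c)%g.
  by rewrite -mulgA E2 !mulgA -(mulgA _ c) G1 mulgA Etv mulgK.
set t := (gr_of tau : GR gT); set S := (gr_of c : GR gT); set u := (gr_of v : GR gT).
have K1 : (1 - t) * (1 - S) * u = u * (1 + S) * (1 - t).
  rewrite !(mulrBl, mulrBr, mulrDl, mulrDr, mulNr, mul1r, mulr1) /t /S /u !gr_of_mul.
  by rewrite E3 E2 -Etv zmod_aux.
set X := \sum_(j < h) gr_mul (\sum_(i < theta j) gr_of (tau ^+ i)%g) (gr_of (sigma ^+ j)%g).
have KX : (1 - t) * X = (\sum_(j < h) (gr_of (sigma ^+ j)%g : GR gT)) * (1 - t).
  rewrite mulr_sumr mulr_suml; apply: eq_bigr => j _.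
  rewrite E mulrA.
  have -> : (1 - t) * (\sum_(i < theta j) gr_of (tau ^+ i)%g : GR gT) = 1 - t ^+ theta j.
    rewrite (eq_bigr (fun i : 'I_(theta j) => t ^+ i)); last by move=> i _; rewrite gr_ofX.
    by rewrite -opprB mulNr -subrX1 opprB.
  rewrite mulrBl mulrBr mul1r mulr1 /t -gr_ofX !gr_of_mul.
  by case: (htheta j) => _ /conjE ->.
split.
  rewrite !mulrA mulrBr mulr1 /S gr_of_mul Fcc -opprB mulNr mulNr; done.
have HT : (1 + S) * (\sum_(j < h) (gr_of (sigma ^+ j)%g : GR gT))
    = \sum_(j < s) (gr_of (sigma ^+ j)%g : GR gT).
  rewrite mulrDl mul1r mulr_sumr hs2 big_split_ord /=; congr (_ + _).
  by apply: eq_bigr => j _; rewrite /S gr_of_mul /c -expgD.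
by rewrite mulrA mulrA K1 -!mulrA KX !mulrA -(mulrA u) HT.
Qed.
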